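(* For all $n \geq 2$ and $1 \leq i \leq n$, $$a_{n,i}(p,q)=p^iq\sum_{j=i}^{n-1}a_{n-1,j}(p,q)+p^iq\sum_{j=1}^{i-1}q^{i-j}a_{n-1,j}(p,q),$$ and $a_{1,1}(p,q)=pq^2$.
   Context: An inversion sequence of length $n$ is a sequence $\rho=\rho_1\cdots\rho_n$ of integers with $1\le \rho_i\le i$ for all $1\le i\le n$. Let $I_n$ be the set of inversion sequences of length $n$ and $I_{n,i}$ the subset of those with last letter $\rho_n=i$. Each $\rho$ is represented as a bargraph whose $i$-th column consists of $\rho_i$ unit cells standing on the $x$-axis. The area of $\rho$ is $\mathrm{area}(\rho)=\rho_1+\cdots+\rho_n$, and the semi-perimeter $\mathrm{sper}(\rho)$ is half the perimeter of the bargraph (the bottom boundary on the $x$-axis included); equivalently $\mathrm{sper}(\rho)=n+\rho_1+\sum_{i=1}^{n-1}\max(\rho_{i+1}-\rho_i,0)$. Define $a_{n,i}(p,q)=\sum_{\rho\in I_{n,i}}p^{\mathrm{area}(\rho)}q^{\mathrm{sper}(\rho)}$. *)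

(* Defs.v *)
From mathcomp Require Import all_boot all_order all_algebra.
Set Implicit Arguments. Unset Strict Implicit. Unset Printing Implicit Defensive.
Import GRing.Theory.

(* An inversion sequence of length n is rho_1 ... rho_n with 1 <= rho_i <= i.
   We encode it as rho : {ffun 'I_n -> 'I_n.+1}, with rho_(k+1) = rho k
   (0-based index k), subject to 1 <= rho k <= k+1. *)
Definition is_invseq (n : nat) (rho : {ffun 'I_n -> 'I_n.+1}) : bool :=
  [forall k : 'I_n, (0 < rho k) && (rho k <= k.+1)].

Definition last_letter (n : nat) (rho : {ffun 'I_n -> 'I_n.+1}) : nat :=
  last 0 [seq (rho k : nat) | k <- enum 'I_n].

Definition area (n : nat) (rho : {ffun 'I_n -> 'I_n.+1}) : nat :=
  \sum_(k < n) (rho k : nat).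

(* sper = n + rho_1 + sum_{i=1}^{n-1} max(rho_{i+1} - rho_i, 0),
   i.e. half the perimeter of the bargraph. With the list s = [rho_1;...;rho_n],
   this is n + sum over consecutive pairs (0,rho_1),(rho_1,rho_2),... of
   the truncated difference. *)
Definition sper (n : nat) (rho : {ffun 'I_n -> 'I_n.+1}) : nat :=
  let s := [seq (rho k : nat) | k <- enum 'I_n] in
  n + sumn (pairmap (fun a b => b - a) 0 s).

Definition a_ni (R : comNzRingType) (n i : nat) (p q : R) : R :=
  \sum_(rho : {ffun 'I_n -> 'I_n.+1} | is_invseq rho && (last_letter rho == i))
     p ^+ area rho * q ^+ sper rho.

(* Main.v *)
Require Import Defs.
From mathcomp Require Import all_boot all_order all_algebra.
From mathcomp Require Import ring zify.
Local Open Scope ring_scope.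
Import GRing.Theory.

Definition Wt (R : comNzRingType) (p q : R) (s : seq nat) : R :=
  p ^+ sumn s * q ^+ (size s + sumn (pairmap (fun a b => b - a) 0 s))%N.

Arguments Wt {R}.

Fixpoint Sq (n : nat) : seq (seq nat) :=
  match n with
  | 0 => [:: [::]]
  | m.+1 => [seq rcons s x | s <- Sq m, x <- iota 1 m.+1]
  end.

Definition okseq (n : nat) (s : seq nat) : bool :=
  (size s == n) && all (fun k => (0 < nth 0 s k) && (nth 0 s k <= k.+1))%N (iota 0 n).

Lemma pairmap_rcons (f : nat -> nat -> nat) a s x :
  pairmap f a (rcons s x) = rcons (pairmap f a s) (f (last a s) x).
Proof. by elim: s a => [|y s IH] a //=; rewrite IH. Qed.

Lemma okseq_rcons n s x :
  okseq n.+1 (rcons s x) = okseq n s && (0 < x <= n.+1)%N.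
Proof.
rewrite /okseq size_rcons eqSS.
case: eqP => Hs; last by [].
rewrite !andTb.
rewrite (_ : iota 0 n.+1 = iota 0 n ++ [:: n]); last by rewrite -addn1 iotaD.
rewrite all_cat all_seq1.
rewrite nth_rcons Hs ltnn eqxx; congr (_ && _).
apply: eq_in_all => k; rewrite mem_iota add0n => /andP [_ Hk].
by rewrite nth_rcons Hs Hk.
Qed.

Lemma memS n s : (s \in Sq n) = okseq n s.
Proof.
elim: n s => [|n IH] s.
  by case: s.
apply/allpairsPdep/idP.
  move=> [s0 [x0 [H1 H2 ->]]].
  rewrite okseq_rcons -IH H1 /=; by rewrite mem_iota in H2.
case/lastP: s => [|s x]; first by rewrite /okseq.
rewrite okseq_rcons -IH => /andP [H1 H2].
by exists s, x; split => //; rewrite mem_iota.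
Qed.

Lemma uniqS n : uniq (Sq n).
Proof.
elim: n => [|n IH] //.
apply: (allpairs_uniq (f := fun s (x:nat) => rcons s x)) => //; first exact: iota_uniq.
move=> [s1 x1] [s2 x2] _ _ /= H.
by case: (rcons_inj H) => -> ->.
Qed.

Section Conv.
Variable n : nat.
Definition fseq (rho : {ffun 'I_n -> 'I_n.+1}) : seq nat :=
  [seq (rho k : nat) | k <- enum 'I_n].

Lemma nth_fseq rho k (Hk : (k < n)%N) : nth 0 (fseq rho) k = rho (Ordinal Hk).
Proof.
rewrite /fseq (nth_map (Ordinal Hk)) ?size_enum_ord //.
by congr (nat_of_ord (rho _)); apply: val_inj; rewrite /= nth_enum_ord.
Qed.

Lemma size_fseq rho : size (fseq rho) = n.
Proof. by rewrite size_map size_enum_ord. Qed.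

Lemma fseq_inj : injective fseq.
Proof.
move=> r1 r2 H; apply/ffunP => k; apply: val_inj.
have := congr1 (fun s => nth 0 s k) H => /=.
rewrite !(nth_fseq _ _ (ltn_ord k)).
by have -> : Ordinal (ltn_ord k) = k by apply: val_inj.
Qed.

Lemma mem_fseq s :
  (s \in [seq fseq rho | rho <- [seq rho <- index_enum {ffun 'I_n -> 'I_n.+1} | is_invseq rho]])
  = okseq n s.
Proof.
apply/mapP/idP.
  move=> [rho]; rewrite mem_filter => /andP [Hr _] ->.
  rewrite /okseq size_fseq eqxx /=; apply/allP => k; rewrite mem_iota add0n => /andP [_ Hk].
  rewrite nth_fseq; by move/forallP: Hr => /(_ (Ordinal Hk)).
move=> /andP [/eqP Hs /allP Ha].
have Hb : forall k : 'I_n, (nth 0 s k < n.+1)%N.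
  move=> k; have := Ha k; rewrite mem_iota add0n ltn_ord => /(_ isT) /andP [_].
  move=> H; apply: leq_trans H _; exact: ltn_ord.
exists [ffun k : 'I_n => inord (nth 0 s k) : 'I_n.+1].
  rewrite mem_filter mem_index_enum andbT; apply/forallP => k.
  rewrite ffunE inordK //; apply: Ha; by rewrite mem_iota add0n ltn_ord.
apply: (@eq_from_nth _ 0); first by rewrite size_fseq.
move=> k; rewrite Hs => Hk; by rewrite nth_fseq ffunE /= inordK // (Hb (Ordinal Hk)).
Qed.

Lemma area_fseq rho : area rho = sumn (fseq rho).
Proof.
rewrite /area /fseq sumnE big_map.
by rewrite big_enum /=; apply: eq_bigl.
Qed.

End Conv.
Arguments fseq {n}.

Lemma a_niE (R : comNzRingType) (p q : R) n i :
  a_ni n i p q = \sum_(s <- Sq n | last 0%N s == i) Wt p q s.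
Proof.
rewrite /a_ni big_mkcondr -big_filter.
have Hperm : perm_eq [seq fseq rho | rho <- [seq rho <- index_enum {ffun 'I_n -> 'I_n.+1} | is_invseq rho]] (Sq n).
  apply: uniq_perm; last by move=> s; rewrite mem_fseq memS.
    rewrite map_inj_uniq; last exact: fseq_inj.
    by rewrite filter_uniq // index_enum_uniq.
  exact: uniqS.
rewrite -(perm_big _ Hperm) big_map [RHS]big_mkcond.
apply: eq_bigr => rho _.
rewrite /Wt size_fseq -area_fseq.
by [].
Qed.

Lemma SqS m : Sq m.+1 = [seq rcons s x | s <- Sq m, x <- iota 1 m.+1].
Proof. by []. Qed.

Lemma Wt_rcons (R : comNzRingType) (p q : R) s x :
  Wt p q (rcons s x) = p ^+ x * q ^+ (1 + (x - last 0%N s)) * Wt p q s.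
Proof.
rewrite /Wt sumn_rcons size_rcons pairmap_rcons sumn_rcons.
set A := sumn s; set C := sumn (pairmap _ _ _); set B := (x - _)%N.
have -> : ((size s).+1 + (C + B) = (1 + B) + (size s + C))%N by lia.
rewrite !exprD; ring.
Qed.

Lemma last_ok m s : okseq m.+1 s -> (0 < last 0 s <= m.+1)%N.
Proof.
case/lastP: s => [|s x]; first by rewrite /okseq.
by rewrite okseq_rcons last_rcons => /andP [_].
Qed.

Lemma sum_pick (R : comNzRingType) (r : seq nat) a (G : R) :
  uniq r -> a \in r -> \sum_(j <- r) (if j == a then G else 0) = G.
Proof.
move=> Hu Ha; rewrite -big_mkcond -big_filter.
have -> : [seq j <- r | j == a] = [:: a] by apply: filter_pred1_uniq.
by rewrite big_seq1.
Qed.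

Lemma sum_pick' (R : comNzRingType) (r : seq nat) a (G : R) :
  uniq r -> a \in r -> \sum_(j <- r) (if a == j then G else 0) = G.
Proof.
move=> Hu Ha; rewrite -[RHS](@sum_pick R r a G Hu Ha); apply: eq_bigr => j _.
by rewrite eq_sym.
Qed.

Theorem lemma2p1 (R : comNzRingType) (p q : R) :
  (forall n i : nat, (2 <= n)%N -> (1 <= i <= n)%N ->
     a_ni n i p q =
       p ^+ i * q * (\sum_(i <= j < n) a_ni n.-1 j p q)
       + p ^+ i * q * (\sum_(1 <= j < i) q ^+ (i - j) * a_ni n.-1 j p q))
  /\ a_ni 1 1 p q = p * q ^+ 2.
Proof.
split; last first.
  rewrite a_niE /= big_cons big_nil /= /Wt /=.
  by rewrite addr0 expr1.
move=> n i Hn /andP [Hi1 Hin].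
case: n Hn Hin => [|m] // Hm Hin /=.
rewrite a_niE SqS big_mkcond big_allpairs_dep.
rewrite (eq_bigr (fun s => p ^+ i * q ^+ (1 + (i - last 0%N s)) * Wt p q s)); last first.
  move=> s _.
  rewrite (eq_bigr (fun x => if x == i then Wt p q (rcons s i) else 0)); last first.
    by move=> x _; rewrite last_rcons; case: eqP => // ->.
  by rewrite sum_pick ?iota_uniq ?mem_iota ?Hi1 ?add1n ?ltnS // Wt_rcons.
transitivity (\sum_(1 <= j < m.+1) p ^+ i * q * q ^+ (i - j) * a_ni m j p q); last first.
  rewrite (big_cat_nat Hi1 Hin) /= addrC; congr (_ + _).
    rewrite mulr_sumr; apply: eq_big_nat => j /andP [Hij _].
    have -> : (i - j = 0)%N by apply/eqP; rewrite subn_eq0.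
    by rewrite expr0 mulr1.
  by rewrite mulr_sumr; apply: eq_bigr => j _; rewrite !mulrA.
rewrite (eq_bigr (fun j => \sum_(s <- Sq m) (if last 0%N s == j then
            p ^+ i * q * q ^+ (i - last 0%N s) * Wt p q s else 0))); last first.
  move=> j _; rewrite a_niE big_mkcond mulr_sumr; apply: eq_bigr => s _.
  by case: eqP => [->|]; rewrite ?mulr0.
rewrite exchange_big /=; apply: eq_big_seq => s Hs.
rewrite sum_pick'; last first.
  rewrite mem_index_iota; move: Hin; case: m Hm Hs => [|m'] // _ Hs _.
  by rewrite memS in Hs; apply: last_ok.
  by rewrite /index_iota iota_uniq.
by rewrite exprD expr1 !mulrA.
Qed.
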